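(* Suppose that the bivariate copula $A$ allows a continuous Markov kernel $K_A$. Then $$\lim_{N\to\infty}\sup_{(x,y)\in[0,1]^2}\left|K_{\mathcal{CB}_N(A)}(x,[0,y])-K_A(x,[0,y])\right|=0,$$ i.e. $(\mathcal{CB}_N(A))_{N\in\mathbb{N}}$ converges uniformly conditional to $A$.
   Context: A (bivariate) copula is a distribution function on $[0,1]^2$ with uniform marginals; each copula $B$ corresponds to a doubly stochastic measure $\mu_B$ with $B(x,y)=\mu_B([0,x]\times[0,y])$. A Markov kernel of $B$ is a map $K_B:[0,1]\times\mathcal{B}([0,1])\to[0,1]$, measurable in the first argument, a probability measure in the second, with $\int_{E_1}K_B(x,E_2)\,d\lambda(x)=\mu_B(E_1\times E_2)$ for all Borel $E_1,E_2$ ($\lambda$ = Lebesgue measure). $A$ allows a continuous Markov kernel if it has a version $K_A$ with $(x,y)\mapsto K_A(x,[0,y])$ continuous on $[0,1]^2$; $K_A$ denotes this version. Checkerboard approximation: $I_1^N=[0,\tfrac1N]$, $I_i^N=(\tfrac{i-1}N,\tfrac iN]$ ($i=2,\dots,N$), $Q_{i,j}^N=I_i^N\times I_j^N$; $\mathcal{CB}_N(A)$ is the absolutely continuous copula with density $N^2\sum_{i,j=1}^N\mu_A(Q^N_{i,j})\mathbf 1_{Q^N_{i,j}}$, with Markov kernel version $K_{\mathcal{CB}_N(A)}(x,[0,y])=N^2\sum_{i,j=1}^N\mu_A(Q^N_{i,j})\mathbf 1_{I^N_i}(x)\,\lambda([0,y]\cap I^N_j)$. *)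

(* Defs.v *)
From HB Require Import structures.
From mathcomp Require Import all_boot all_order all_algebra.
From mathcomp Require Import all_classical all_reals all_analysis measurable_realfun.
Set Implicit Arguments. Unset Strict Implicit. Unset Printing Implicit Defensive.
Import Order.TTheory GRing.Theory Num.Theory.
Import numFieldNormedType.Exports.
Local Open Scope classical_set_scope.
Local Open Scope ring_scope.

Definition unitI (R : realType) : set R := `[0%R, 1%R].
Arguments unitI R : clear implicits.

(* Doubly stochastic measure on [0,1]^2 (realised on R x R, vanishing outside
   [0,1]^2): uniform marginals. Every copula B corresponds to exactly one such
   measure mu_B with B(x,y) = mu_B([0,x] x [0,y]). *)
Definition doubly_stochastic (R : realType)
  (mu : {measure set (R * R)%type -> \bar R}) : Prop :=
  mu (~` (unitI R `*` unitI R)) = 0%E /\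
  (forall E : set R, measurable E -> E `<=` unitI R ->
     mu (E `*` unitI R) = (@lebesgue_measure R) E) /\
  (forall E : set R, measurable E -> E `<=` unitI R ->
     mu (unitI R `*` E) = (@lebesgue_measure R) E).

Definition copula_of (R : realType) (mu : {measure set (R * R)%type -> \bar R})
  (x y : R) : R := fine (mu (`[0%R, x] `*` `[0%R, y])).

Definition markov_kernel_of (R : realType)
  (mu : {measure set (R * R)%type -> \bar R})
  (K : R -> {measure set R -> \bar R}) : Prop :=
  (forall x, unitI R x -> K x (unitI R) = 1%E /\ K x (~` unitI R) = 0%E) /\
  (forall E : set R, measurable E -> E `<=` unitI R ->
     measurable_fun (unitI R) (fun x => K x E)) /\
  (forall E1 E2 : set R, measurable E1 -> measurable E2 ->
     E1 `<=` unitI R -> E2 `<=` unitI R ->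
     (\int[@lebesgue_measure R]_(x in E1) K x E2)%E = mu (E1 `*` E2)).

Definition continuous_kernel (R : realType) (K : R -> {measure set R -> \bar R})
  : Prop :=
  {within unitI R `*` unitI R,
     continuous (fun p : R * R => fine (K p.1 `[0%R, p.2]%classic))}.

Definition cbI (R : realType) (N i : nat) : set R :=
  if i == 1%N then `[0%R, N%:R^-1]%classic
  else `](i.-1)%:R / N%:R, i%:R / N%:R]%classic.
Arguments cbI R N i : clear implicits.

Definition cbQ (R : realType) (N i j : nat) : set (R * R)%type :=
  cbI R N i `*` cbI R N j.
Arguments cbQ R N i j : clear implicits.

(* The version of the Markov kernel of CB_N(A), evaluated at (x,[0,y]):
   N^2 sum_{i,j=1}^N mu_A(Q_ij) 1_{I_i}(x) lambda([0,y] cap I_j). *)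
Definition cb_kernel (R : realType) (mu : {measure set (R * R)%type -> \bar R})
  (N : nat) (x y : R) : R :=
  (N%:R ^+ 2) * \sum_(1 <= i < N.+1) \sum_(1 <= j < N.+1)
     fine (mu (cbQ R N i j)) * (\1_(cbI R N i) x)
       * fine ((@lebesgue_measure R) (`[0%R, y]%classic `&` cbI R N j)).

(* Main.v *)
From HB Require Import structures.
From mathcomp Require Import all_boot all_order all_algebra.
From mathcomp Require Import all_classical all_reals all_analysis measurable_realfun.
From mathcomp Require Import ring lra.
Import Order.TTheory GRing.Theory Num.Theory.
Import numFieldNormedType.Exports.
Local Open Scope classical_set_scope.
Local Open Scope ring_scope.
Require Import Defs.
Lemma unif_cont (R : realType) (A : set (R * R)%type) (f : R * R -> R) :
  compact A -> {within A, continuous f} -> forall e : R, 0 < e ->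
  exists2 d : R, 0 < d & forall p q, A p -> A q -> `|p.1 - q.1| < d ->
    `|p.2 - q.2| < d -> `|f p - f q| < e.
Proof.
move=> cA cf e e0.
have /compact_near_coveringP/near_covering_withinP cov := cA.
pose P (n : nat) (p : R * R) := forall q, A q -> `|p.1 - q.1| < n.+1%:R^-1 ->
   `|p.2 - q.2| < n.+1%:R^-1 -> `|f p - f q| < e.
have : \forall n \near \oo, A `<=` P n.
  apply: cov => x Ax.
  have := (iffLR (subspace_continuousP _ _) cf x Ax).
  move=> /cvgrPdist_lt /(_ (e / 2)) /=.
  have e20 : 0 < e / 2 by rewrite divr_gt0.
  move=> /(_ e20).
  rewrite /=.
  move=> /nbhs_ballP [r /= r0 Hr].
  have r20 : 0 < r / 2 by rewrite divr_gt0.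
  exists (ball x (r / 2), [set n | n.+1%:R^-1 < r / 2]).
    split => /=; first exact: nbhsx_ballx.
    exact: (near_infty_natSinv_lt (PosNum r20)).
  case=> x' n /= [[bx1 bx2] hn] Ax' q Aq h1 h2.
  have Hx' := Hr x'.
  have Hq := Hr q.
  rewrite /ball /= in bx1 bx2.
  have hx' : ball x r x'.
    split; rewrite /ball /=.
      by apply: lt_trans bx1 _; rewrite ltr_pdivrMr // ltr_pMr // ltr1n.
    by apply: lt_trans bx2 _; rewrite ltr_pdivrMr // ltr_pMr // ltr1n.
  have hq : ball x r q.
    split; rewrite /ball /=.
      rewrite (_ : x.1 - q.1 = (x.1 - x'.1) + (x'.1 - q.1)); last by ring.
      apply: le_lt_trans (ler_normD _ _) _.
      rewrite (splitr r); apply: ltrD => //; exact: lt_trans h1 hn.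
    rewrite (_ : x.2 - q.2 = (x.2 - x'.2) + (x'.2 - q.2)); last by ring.
    apply: le_lt_trans (ler_normD _ _) _.
    rewrite (splitr r); apply: ltrD => //; exact: lt_trans h2 hn.
  have := Hx' hx' Ax'; have := Hq hq Aq.
  move=> a b.
  rewrite (_ : f x' - f q = - (f x - f x') + (f x - f q)); last by ring.
  apply: le_lt_trans (ler_normD _ _) _.
  by rewrite normrN (splitr e); apply: ltrD.
case=> n0 _ Hn.
exists (n0.+1%:R^-1); first by rewrite invr_gt0 ltr0n.
move=> p q Ap Aq; exact: (Hn n0 (leqnn _) p Ap q Aq).
Qed.
Lemma min_conc (R : realType) (y a h : R) : 0 < h ->
  let D := (Num.min y a - Num.min y (a - h)) - (Num.min y (a + h) - Num.min y a) in
  0 <= D /\ (D != 0 -> a - h < y < a + h).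
Proof.
move=> h0 /=; rewrite !minEle.
case: (leP y a) => ya; case: (leP y (a - h)) => yah; case: (leP y (a + h)) => yah2;
  split; try lra; try (by move=> _; apply/andP; split; lra);
  try (by rewrite subrr subr0 eqxx);
  try (move=> _; apply/andP; split; lra).
all: try (by rewrite !subrr eqxx).
all: try (move=> H; exfalso; move: H; apply/negP; rewrite negbK; apply/eqP; lra).
Qed.
Lemma abel (R : realType) (p w : nat -> R) n :
  \sum_(1 <= j < n.+1) (p j - p j.-1) * w j =
  \sum_(0 <= j < n.+1) p j * (w j - w j.+1) + p n * w n.+1 - p 0%N * w 0%N.
Proof.
elim: n => [|n IH].
  rewrite big_geq // big_nat1; ring.
rewrite [in RHS]big_nat_recr //= big_nat_recr //= IH; ring.
Qed.
Section cb.
Variables (R : realType) (N : nat).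
Hypothesis N0 : (0 < N)%N.

Let NR0 : 0 < N%:R :> R. Proof. by rewrite ltr0n. Qed.

Lemma cbIE i x : cbI R N i x <->
  (if i == 1%N then 0 <= x <= N%:R^-1 else (i.-1)%:R / N%:R < x <= i%:R / N%:R).
Proof.
rewrite /cbI; case: ifP => _ /=; by rewrite in_itv /=.
Qed.

Lemma cbI_sub i : (1 <= i <= N)%N -> cbI R N i `<=` unitI R.
Proof.
move=> /andP[i1 iN] x /cbIE; rewrite /unitI /= in_itv /=.
have h1 : N%:R^-1 <= 1 :> R by rewrite invf_le1 // ler1n.
have h2 : i%:R / N%:R <= 1 :> R by rewrite ler_pdivrMr // mul1r ler_nat.
have h3 : 0 <= (i.-1)%:R / N%:R :> R by rewrite divr_ge0.
case: ifP => _ /andP[a b]; apply/andP; split.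
- done.
- exact: le_trans b h1.
- exact: (le_trans h3 (ltW a)).
- exact: le_trans b h2.
Qed.

Lemma cbI_meas i : measurable (cbI R N i).
Proof. by rewrite /cbI; case: ifP. Qed.

Lemma cbI_leb i : (1 <= i)%N -> (@lebesgue_measure R) (cbI R N i) = (N%:R^-1)%:E.
Proof.
move=> i1; rewrite /cbI; case: ifP => [_|/eqP i1'].
  by rewrite lebesgue_measure_itv /= lte_fin invr_gt0 NR0 oppr0 adde0.
rewrite (lebesgue_measure_itv `]_, _]) /= lte_fin ltr_pM2r ?invr_gt0 // ltr_nat.
case: i i1 i1' => // -[//|i] _ _ /=.
rewrite ltnS leqnn -EFinD; congr (_%:E).
by rewrite -mulrBl -natrB // subSnn mul1r.
Qed.

Lemma cbI_close i x t : cbI R N i x -> cbI R N i t -> `|x - t| <= N%:R^-1.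
Proof.
move=> /cbIE hx /cbIE ht.
case: ifP hx ht => _.
  move=> /andP[a b] /andP[c d]; rewrite ler_norml; apply/andP; split; lra.
move=> /andP[a b] /andP[c d].
have e : i%:R / N%:R = (i.-1)%:R / N%:R + N%:R^-1 :> R.
  case: i a b c d => [|i] /= *; last by rewrite -nat1r mulrDl mul1r addrC.
  by rewrite mul0r; lra.
rewrite ler_norml; apply/andP; split; lra.
Qed.

Lemma cbI_indic_sum n x : (1 <= n)%N ->
  \sum_(1 <= i < n.+1) (\1_(cbI R N i) x : R) = \1_(`[0, n%:R / N%:R]%classic) x.
Proof.
elim: n => // -[_ _|n IH _].
  rewrite big_nat1 /cbI /= mul1r; done.
rewrite big_nat_recr //= IH // !indicE /cbI /=.
rewrite !mem_setE !in_itv /=.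
have h : (n.+1)%:R / N%:R <= (n.+2)%:R / N%:R :> R.
  by rewrite ler_pM2r ?invr_gt0 // ler_nat.
have h0 : 0 <= (n.+1)%:R / N%:R :> R by rewrite divr_ge0.
case: (leP 0 x) => x0 /=; last first.
  have : ~~ ((n.+1)%:R / N%:R < x) by rewrite -leNgt; exact: (le_trans (ltW x0) h0).
  by move/negbTE => ->; rewrite addr0.
case: (leP x ((n.+1)%:R / N%:R)) => xa /=.
  by rewrite (le_trans xa h) /= addr0.
by rewrite add0r.
Qed.

Lemma cbI_indic_sum1 x : unitI R x ->
  \sum_(1 <= i < N.+1) (\1_(cbI R N i) x : R) = 1.
Proof.
move=> ux; rewrite cbI_indic_sum // indicE mem_setE in_itv /= divff ?gt_eqF //.
by move: ux; rewrite /unitI /= in_itv /= => ->.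
Qed.

End cb.
Lemma convex_bound (R : realType) (m n : nat) (e V : nat -> R) (a eps : R) :
  (forall i, (m <= i < n)%N -> 0 <= e i) ->
  (forall i, (m <= i < n)%N -> e i != 0 -> `|V i - a| <= eps) ->
  \sum_(m <= i < n) e i = 1 ->
  `|\sum_(m <= i < n) e i * V i - a| <= eps.
Proof.
move=> e0 hV s1.
have -> : \sum_(m <= i < n) e i * V i - a = \sum_(m <= i < n) e i * (V i - a).
  rewrite -[in LHS](mul1r a) -s1 mulr_suml -sumrB.
  by apply: eq_bigr => i _; rewrite mulrBr.
apply: le_trans (ler_norm_sum _ _ _) _.
rewrite -[eps]mul1r -s1 mulr_suml big_nat_cond [X in _ <= X]big_nat_cond.
apply: ler_sum => i /andP[hi _].
rewrite normrM ger0_norm ?e0 //.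
have [->|ne] := eqVneq (e i) 0; first by rewrite !mul0r.
by apply: ler_wpM2l; [exact: e0|exact: hV].
Qed.
Lemma itv_cup (R : realType) (a b c : R) : a <= b -> b <= c ->
  `[a, c]%classic = `[a, b]%classic `|` `]b, c]%classic.
Proof.
move=> ab bc; apply/seteqP; split => z /=; rewrite !in_itv /=.
  move=> /andP[h1 h2]; case: (leP z b) => zb; [left|right]; apply/andP; split => //.
case=> /andP[h1 h2]; apply/andP; split => //; lra.
Qed.

Lemma itv_cap0 (R : realType) (a b c : R) :
  `[a, b]%classic `&` `]b, c]%classic = set0.
Proof.
apply/seteqP; split => z //=; rewrite !in_itv /= => -[/andP[_ h1] /andP[h2 _]]; lra.
Qed.

Lemma leb_cap1 (R : realType) (y b : R) : 0 <= y -> 0 <= b ->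
  fine ((@lebesgue_measure R) (`[0, y]%classic `&` `[0, b]%classic)) = Num.min y b.
Proof.
move=> y0 b0.
have -> : `[0, y]%classic `&` `[0, b]%classic = `[0, Num.min y b]%classic :> set R.
  apply/seteqP; split => z /=; rewrite !in_itv /= le_min.
    by move=> [/andP[-> ->] /andP[_ ->]].
  by move=> /andP[-> /andP[-> ->]].
rewrite (lebesgue_measure_itv `[_, _]) /= lte_fin.
case: ltP => h /=; first by rewrite subr0.
by apply/eqP; rewrite eq_le; apply/andP; split; [rewrite le_min y0 b0|]; rewrite ?h.
Qed.

Lemma leb_cap2 (R : realType) (y a b : R) : 0 <= a -> a <= b ->
  fine ((@lebesgue_measure R) (`[0, y]%classic `&` `]a, b]%classic)) =
  Num.min y b - Num.min y a.
Proof.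
move=> a0 ab.
have -> : `[0, y]%classic `&` `]a, b]%classic = `]a, Num.min y b]%classic :> set R.
  apply/seteqP; split => z /=; rewrite !in_itv /= le_min.
    move=> [/andP[_ ->] /andP[-> ->]] //.
  move=> /andP[h /andP[-> ->]]; rewrite h andbT; split => //; lra.
rewrite (lebesgue_measure_itv `]_, _]) /= lte_fin.
rewrite !minEle; case: (leP y b) => yb; case: (leP y a) => ya /=.
all: try lra.
case: ltP => h /=; lra.
Qed.

Section main.
Variables (R : realType) (mu : {measure set (R * R)%type -> \bar R})
  (K : R -> {measure set R -> \bar R}).
Hypotheses (hds : doubly_stochastic mu) (hmk : markov_kernel_of mu K).

Lemma unit_meas : measurable (unitI R).
Proof. exact: measurable_itv. Qed.

Lemma itv_sub (a b : R) : 0 <= a -> b <= 1 -> `[a, b]%classic `<=` unitI R.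
Proof.
move=> a0 b1 z /=; rewrite /unitI /= !in_itv /= => /andP[h1 h2].
apply/andP; split; lra.
Qed.

Lemma mu_le1 A B : measurable A -> measurable B -> A `<=` unitI R -> B `<=` unitI R ->
  (mu (A `*` B) <= 1)%E.
Proof.
move=> mA mB sA sB.
have -> : (1 = mu (unitI R `*` unitI R))%E.
  case: hds => _ [h _]; rewrite h; [|exact: unit_meas|by []].
  rewrite /unitI (lebesgue_measure_itv `[_, _]) /=.
  by rewrite lte_fin ltr01 oppr0 adde0.
apply: le_measure; rewrite ?inE; try (apply: measurableX => //; exact: unit_meas).
by move=> p [/sA ? /sB ?]; split.
Qed.

Lemma mu_fin A B : measurable A -> measurable B -> A `<=` unitI R -> B `<=` unitI R ->
  mu (A `*` B) \is a fin_num.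
Proof.
move=> mA mB sA sB; rewrite ge0_fin_numE //.
apply: (le_lt_trans (mu_le1 _ _ mA mB sA sB)); exact: ltry.
Qed.

Lemma mu_zero A : measurable A -> A `<=` unitI R -> mu (A `*` `[0, 0]%classic) = 0%E.
Proof.
move=> mA sA; apply/eqP; rewrite eq_le measure_ge0 andbT.
have <- : (@lebesgue_measure R) `[0, 0]%classic = 0%E.
  by rewrite (lebesgue_measure_itv `[_, _]) /= ltxx.
case: hds => _ [_ h]; rewrite -h //; last exact: itv_sub.
apply: le_measure; rewrite ?inE; try (apply: measurableX => //; exact: unit_meas).
by move=> p [/sA ? ?]; split.
Qed.

Lemma mu_split A (a b : R) : measurable A -> A `<=` unitI R -> 0 <= a -> a <= b -> b <= 1 ->
  fine (mu (A `*` `]a, b]%classic)) =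
  fine (mu (A `*` `[0, b]%classic)) - fine (mu (A `*` `[0, a]%classic)).
Proof.
move=> mA sA a0 ab b1.
have setXUr (B C : set R) : A `*` (B `|` C) = A `*` B `|` A `*` C.
  by apply/seteqP; split => -[x y] /=; [move=> [? [?|?]]; [left|right]|
    move=> [[? ?]|[? ?]]; split => //; [left|right]].
rewrite (@itv_cup _ _ _ _ a0 ab) setXUr measureU; last 3 first.
- exact: measurableX.
- exact: measurableX.
- by rewrite -setXI setIid itv_cap0 setX0.
rewrite fineD; first by ring.
- by apply: mu_fin => //; apply: itv_sub => //; lra.
- apply: mu_fin => //; apply: (subset_trans _ (@itv_sub _ _ (le_refl 0) b1)).
  by move=> z /=; rewrite !in_itv /= => /andP[h1 h2]; apply/andP; split; lra.
Qed.

Lemma K_fin (t s : R) : unitI R t -> 0 <= s -> s <= 1 ->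
  K t `[0%R, s]%classic = (fine (K t `[0%R, s]%classic))%:E /\
  0 <= fine (K t `[0%R, s]%classic) <= 1.
Proof.
move=> ut s0 s1.
have h1 : (K t `[0%R, s]%classic <= 1)%E.
  case: hmk => [h _]; case: (h t ut) => <- _.
  by apply: le_measure; rewrite ?inE //; [exact: unit_meas|exact: itv_sub].
have hf : K t `[0%R, s]%classic \is a fin_num.
  by rewrite ge0_fin_numE //; apply: (le_lt_trans h1); exact: ltry.
split; first by rewrite fineK.
by rewrite fine_ge0 //= -lee_fin fineK.
Qed.

Lemma int_bound A (s r c C : R) : measurable A -> A `<=` unitI R -> 0 <= s -> s <= 1 ->
  (@lebesgue_measure R) A = r%:E -> 0 <= C ->
  (forall t, A t -> c <= fine (K t `[0%R, s]%classic) <= C) ->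
  c * r <= fine (mu (A `*` `[0%R, s]%classic)) <= C * r.
Proof.
move=> mA sA s0 s1 hA C0 hb.
have r0 : 0 <= r by rewrite -lee_fin -hA measure_ge0.
have ms : measurable (`[0%R, s]%classic : set R) by exact: measurable_itv.
have fin := mu_fin _ _ mA ms sA (itv_sub _ _ (le_refl 0) s1).
have Heq : mu (A `*` `[0%R, s]%classic) = (\int[@lebesgue_measure R]_(x in A) K x `[0%R, s]%classic)%E.
  case: hmk => _ [_ h]; rewrite h //; exact: itv_sub.
have mK : measurable_fun A (fun x => K x `[0%R, s]%classic).
  case: hmk => _ [h _]; apply: (measurable_funS unit_meas sA); apply: h => //.
  exact: itv_sub.
apply/andP; split; rewrite -lee_fin fineK // Heq.
- have [c0|c0] := leP c 0.
    apply: (@le_trans _ _ 0%E); first by rewrite lee_fin mulr_le0_ge0.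
    by apply: integral_ge0 => x _.
  rewrite EFinM -hA -integral_cst //.
  apply: ge0_le_integral => //.
  + by move=> x _; rewrite lee_fin ltW.
  + move=> x Ax; have /andP[h _] := hb x Ax.
    by rewrite (K_fin _ _ (sA x Ax) s0 s1).1 lee_fin.
- rewrite EFinM -hA -integral_cst //.
  apply: ge0_le_integral => //.
  + move=> x Ax; have /andP[_ h] := hb x Ax.
    by rewrite (K_fin _ _ (sA x Ax) s0 s1).1 lee_fin.
Qed.

Definition wgt (N : nat) (y : R) (j : nat) : R :=
  N%:R * (Num.min y (j%:R / N%:R) - Num.min y ((j%:R - 1) / N%:R)).
Definition pp (N i j : nat) : R :=
  N%:R * fine (mu (cbI R N i `*` `[0%R, j%:R / N%:R]%classic)).

Lemma cbI_meas' N i : measurable (cbI R N i).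
Proof. by rewrite /cbI; case: ifP. Qed.

Lemma cbI_sub' N i : (0 < N)%N -> (1 <= i <= N)%N -> cbI R N i `<=` unitI R.
Proof.
move=> N0 /andP[i1 iN] x.
have NR0 : 0 < N%:R :> R by rewrite ltr0n.
have h1 : N%:R^-1 <= 1 :> R by rewrite invf_le1 // ler1n.
have h2 : i%:R / N%:R <= 1 :> R by rewrite ler_pdivrMr // mul1r ler_nat.
have h3 : 0 <= (i.-1)%:R / N%:R :> R by rewrite divr_ge0.
rewrite /cbI /unitI; case: ifP => _ /=; rewrite !in_itv /=.
  move=> /andP[a b]; apply/andP; split => //; exact: le_trans b h1.
move=> /andP[a b]; apply/andP; split; [exact: (le_trans h3 (ltW a))|exact: le_trans b h2].
Qed.

Lemma muQ N i j : (0 < N)%N -> (1 <= i <= N)%N -> (1 <= j <= N)%N ->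
  fine (mu (cbQ R N i j)) = (pp N i j - pp N i j.-1) / N%:R.
Proof.
move=> N0 hi /andP[j1 jN].
have NR0 : 0 < N%:R :> R by rewrite ltr0n.
rewrite /pp -mulrBr mulrC mulrA mulVf ?gt_eqF // mul1r /cbQ.
have mI := cbI_meas' N i; have sI := cbI_sub' N i N0 hi.
rewrite [cbI R N j]/cbI; case: ifP => [/eqP j1'|/eqP j1'].
  rewrite j1' /= mul0r mu_zero // subr0 mul1r //.
case: j j1 jN j1' => // -[//|j] _ jN _ /=.
rewrite mu_split //.
- by rewrite ler_pM2r ?invr_gt0 // ler_nat.
- by rewrite ler_pdivrMr // mul1r ler_nat.
Qed.

Lemma lebI N (y : R) j : (0 < N)%N -> (1 <= j)%N -> 0 <= y ->
  fine ((@lebesgue_measure R) (`[0%R, y]%classic `&` cbI R N j)) = wgt N y j / N%:R.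
Proof.
move=> N0 j1 y0.
have NR0 : 0 < N%:R :> R by rewrite ltr0n.
rewrite /wgt mulrC mulrA mulVf ?gt_eqF // mul1r /cbI.
case: ifP => [/eqP ->|/eqP j1'].
  rewrite leb_cap1 //.
  by rewrite subrr mul0r mul1r (_ : Num.min y 0 = 0) ?subr0 // minEle; case: leP => //; lra.
case: j j1 j1' => // -[//|j] _ _ /=.
rewrite leb_cap2 //; first by rewrite -natr1 addrK.
by rewrite ler_pM2r ?invr_gt0 // ler_nat.
Qed.

Lemma wgt0 N (y : R) : (0 < N)%N -> 0 <= y -> wgt N y 0 = 1.
Proof.
move=> N0 y0; have NR0 : 0 < N%:R :> R by rewrite ltr0n.
have hN : 0 < N%:R^-1 :> R by rewrite invr_gt0.
rewrite /wgt mul0r sub0r mulNr mul1r !minEle.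
case: leP => h1; case: leP => h2; try lra.
  have -> : y = 0 by lra.
  by rewrite sub0r opprK mulfV // gt_eqF.
by rewrite sub0r opprK mulfV // gt_eqF.
Qed.

Lemma wgtN N (y : R) : (0 < N)%N -> y <= 1 -> wgt N y N.+1 = 0.
Proof.
move=> N0 y1; have NR0 : 0 < N%:R :> R by rewrite ltr0n.
rewrite /wgt -natr1 addrK divff ?gt_eqF // !minEle.
have h : 1 <= (N%:R + 1) / N%:R :> R.
  by rewrite ler_pdivlMr // mul1r lerDl.
rewrite y1 (le_trans y1 h) subrr mulr0 //.
Qed.

Lemma wgtd N (y : R) j : (0 < N)%N ->
  0 <= wgt N y j - wgt N y j.+1 /\
  (wgt N y j - wgt N y j.+1 != 0 -> `|y - j%:R / N%:R| < N%:R^-1).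
Proof.
move=> N0; have NR0 : 0 < N%:R :> R by rewrite ltr0n.
have hN : 0 < N%:R^-1 :> R by rewrite invr_gt0.
have [h1 h2] := @min_conc R y (j%:R / N%:R) _ hN.
have e1 : (j%:R - 1) / N%:R = j%:R / N%:R - N%:R^-1 :> R by rewrite mulrBl mul1r.
have e2 : j.+1%:R / N%:R = j%:R / N%:R + N%:R^-1 :> R by rewrite -natr1 mulrDl mul1r.
have e3 : (j.+1%:R - 1) / N%:R = j%:R / N%:R :> R by rewrite -natr1 addrK.
have -> : wgt N y j - wgt N y j.+1 = N%:R *
  ((Num.min y (j%:R / N%:R) - Num.min y (j%:R / N%:R - N%:R^-1)) -
   (Num.min y (j%:R / N%:R + N%:R^-1) - Num.min y (j%:R / N%:R))).
  by rewrite /wgt e1 e2 e3 -mulrBr.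
split; first by rewrite mulr_ge0 // ltW.
rewrite mulf_eq0 negb_or => /andP[_ /h2 /andP[a b]].
rewrite ltr_norml; apply/andP; split; lra.
Qed.

Lemma pp0 N i : (0 < N)%N -> (1 <= i <= N)%N -> pp N i 0 = 0.
Proof.
move=> N0 hi; rewrite /pp mul0r mu_zero ?mulr0 //.
  exact: cbI_meas'.
exact: cbI_sub'.
Qed.

Lemma V_eq N i (y : R) : (0 < N)%N -> (1 <= i <= N)%N -> 0 <= y -> y <= 1 ->
  N%:R ^+ 2 * \sum_(1 <= j < N.+1) fine (mu (cbQ R N i j)) *
     fine ((@lebesgue_measure R) (`[0%R, y]%classic `&` cbI R N j)) =
  \sum_(0 <= j < N.+1) (wgt N y j - wgt N y j.+1) * pp N i j.
Proof.
move=> N0 hi y0 y1; have NR0 : 0 < N%:R :> R by rewrite ltr0n.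
have -> : \sum_(1 <= j < N.+1) fine (mu (cbQ R N i j)) *
     fine ((@lebesgue_measure R) (`[0%R, y]%classic `&` cbI R N j)) =
  \sum_(1 <= j < N.+1) ((pp N i j - pp N i j.-1) * wgt N y j) / N%:R ^+ 2.
  apply: eq_big_nat => j /andP[j1 jN]; rewrite muQ // ?j1 // lebI //.
  by field; rewrite gt_eqF.
rewrite -mulr_suml mulrC mulfVK; last by rewrite expf_neq0 // gt_eqF.
rewrite abel pp0 // wgtN // mulr0 mul0r !subr0.
by rewrite addr0; apply: eq_bigr => j _; rewrite mulrC.
Qed.

Definition Fk (p : R * R) : R := fine (K p.1 `[0%R, p.2]%classic).

Lemma pp_bound N i j (x y eps d : R) :
  (0 < N)%N -> N%:R^-1 < d -> (1 <= i <= N)%N -> (j <= N)%N -> cbI R N i x -> unitI R y ->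
  `|y - j%:R / N%:R| < N%:R^-1 ->
  (forall p q, (unitI R `*` unitI R) p -> (unitI R `*` unitI R) q ->
     `|p.1 - q.1| < d -> `|p.2 - q.2| < d -> `|Fk p - Fk q| < eps) ->
  `|pp N i j - Fk (x, y)| <= eps.
Proof.
move=> N0 Nd hi jN xi uy hyj Hu.
have NR0 : 0 < N%:R :> R by rewrite ltr0n.
have ux : unitI R x := cbI_sub' N i N0 hi _ xi.
have s0 : 0 <= j%:R / N%:R :> R by rewrite divr_ge0.
have s1 : j%:R / N%:R <= 1 :> R by rewrite ler_pdivrMr // mul1r ler_nat.
have uy' := uy; rewrite /unitI /= in_itv /= in uy'; case/andP: uy' => y0 y1.
have a0 : 0 <= Fk (x, y) by case/andP: (K_fin x y ux y0 y1).2.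
have d0 : 0 < d by apply: lt_trans Nd; rewrite invr_gt0.
have eps0 : 0 < eps.
  have := Hu (x, y) (x, y); rewrite !subrr normr0 => /(_ (conj ux uy) (conj ux uy) d0 d0).
  by apply: le_lt_trans.
have hb : forall t, cbI R N i t ->
    Fk (x, y) - eps <= fine (K t `[0%R, j%:R / N%:R]%classic) <= Fk (x, y) + eps.
  move=> t ti.
  have := Hu (t, j%:R / N%:R) (x, y).
  rewrite /Fk /= => /(_ _ _ _ _) h.
  have h' : `|fine (K t `[0%R, j%:R / N%:R]%classic) - fine (K x `[0%R, y]%classic)| < eps.
    apply: h.
    - split; [exact: cbI_sub' N i N0 hi t ti|].
      by rewrite /unitI /= in_itv /= s0 s1.
    - by split.
    - exact: le_lt_trans (@cbI_close _ _ _ _ _ ti xi) Nd.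
    - by rewrite distrC; exact: lt_trans hyj Nd.
  by move: h'; rewrite ltr_distl => /andP[p q]; rewrite /Fk /= !ltW.
have := int_bound _ _ _ _ _ (cbI_meas' N i) (cbI_sub' N i N0 hi) s0 s1
  (@cbI_leb R N N0 i (proj1 (andP hi))) _ hb.
move=> /(_ (addr_ge0 a0 (ltW eps0))) /andP[l u].
rewrite /pp ler_distl; apply/andP; split.
- by rewrite mulrC -ler_pdivrMr.
- by rewrite mulrC -ler_pdivlMr.
Qed.

Lemma key N (eps d x y : R) :
  (0 < N)%N -> N%:R^-1 < d ->
  (forall p q, (unitI R `*` unitI R) p -> (unitI R `*` unitI R) q ->
     `|p.1 - q.1| < d -> `|p.2 - q.2| < d -> `|Fk p - Fk q| < eps) ->
  unitI R x -> unitI R y ->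
  `|cb_kernel mu N x y - Fk (x, y)| <= eps.
Proof.
move=> N0 Nd Hu ux uy.
have uy' := uy; rewrite /unitI /= in_itv /= in uy'; case/andP: uy' => y0 y1.
have -> : cb_kernel mu N x y = \sum_(1 <= i < N.+1) (\1_(cbI R N i) x : R) *
   (N%:R ^+ 2 * \sum_(1 <= j < N.+1) fine (mu (cbQ R N i j)) *
     fine ((@lebesgue_measure R) (`[0%R, y]%classic `&` cbI R N j))).
  rewrite /cb_kernel mulr_sumr; apply: eq_bigr => i _.
  rewrite [RHS]mulrCA; congr (_ * _); rewrite mulr_sumr; apply: eq_bigr => j _.
  ring.
apply: convex_bound; last exact: cbI_indic_sum1.
  by move=> i _; rewrite indicE ler0n.
move=> i /andP[i1 iN]; rewrite indicE pnatr_eq0 eqb0 negbK => /set_mem xi.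
have hi : (1 <= i <= N)%N by rewrite i1 -ltnS iN.
rewrite V_eq //.
apply: convex_bound.
- by move=> j _; case: (wgtd N y j N0).
- move=> j /andP[_ jN] /(wgtd N y j N0).2 hj.
  by apply: (@pp_bound N i j x y eps d N0 Nd hi _ xi uy hj Hu); rewrite -ltnS.
- have -> : \sum_(0 <= j < N.+1) (wgt N y j - wgt N y j.+1) =
            \sum_(0 <= j < N.+1) ((- wgt N y j.+1) - (- wgt N y j)).
    by apply: eq_bigr => j _; rewrite opprK addrC.
  by rewrite telescope_sumr // wgtN // wgt0 // oppr0 opprK add0r.
Qed.

End main.

Theorem lemma3p2 (R : realType) (mu : {measure set (R * R)%type -> \bar R})
  (K : R -> {measure set R -> \bar R}) :
  doubly_stochastic mu ->
  markov_kernel_of mu K ->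
  continuous_kernel K ->
  (fun N : nat =>
     ereal_sup [set (`| cb_kernel mu N p.1 p.2 - fine (K p.1 `[0%R, p.2]%classic) |)%:E
               | p in unitI R `*` unitI R])
    @ \oo --> 0%E.
Proof.
move=> hds hmk hc.
set u := fun N : nat => _.
have cA : compact (unitI R `*` unitI R).
  by apply: compact_setX; exact: segment_compact.
have main : forall eps : R, 0 < eps ->
    \forall N \near \oo, (0 <= u N)%E /\ (u N <= eps%:E)%E.
  move=> eps e0.
  have [d d0 Hu] := @unif_cont R _ _ cA hc _ e0.
  have [n0 _ Hn0] := near_infty_natSinv_lt (PosNum d0).
  exists n0.+1 => // N /= hN.
  have N0 : (0 < N)%N by apply: leq_trans hN.
  have Nd : N%:R^-1 < d.
    have := Hn0 N.-1; rewrite prednK // => /(_ _); apply; rewrite /= -ltnS prednK //.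
  have u01 : unitI R 0 by rewrite /unitI /= in_itv /= lexx ler01.
  split.
  - pose z := ((0 : R), (0 : R)).
    apply: (@le_trans _ _ ((`| cb_kernel mu N z.1 z.2 -
       fine (K z.1 `[0%R, z.2]%classic) |)%:E)); first by rewrite lee_fin.
    by apply: ereal_sup_ubound; exists z.
  - apply: ge_ereal_sup => z [p [p1 p2] <-]; rewrite lee_fin.
    have := @key R mu K hds hmk N eps d p.1 p.2 N0 Nd Hu p1 p2.
    by case: p p1 p2.
apply/fine_cvgP; split.
  apply: filterS (main 1 ltr01) => N [h0 h1].
  rewrite ge0_fin_numE //; apply: (le_lt_trans h1); exact: ltry.
apply/cvgrPdist_le => eps e0.
apply: filterS (main eps e0) => N [h0 h1].
have fin : u N \is a fin_num.
  rewrite ge0_fin_numE //; apply: (le_lt_trans h1); exact: ltry.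
rewrite /= sub0r normrN ger0_norm ?fine_ge0 //.
by rewrite -lee_fin fineK.
Qed.
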